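(* Let $T$ be a ranked monad. Every open $w\in\mathcal{O}(\mathrm{LB}_1T)$ can be written as $w=\bigvee_{m\in T1}\hat m\wedge\mathrm{const}_{w(m)}$, where $\hat m:=\lambda n.[\![m\sim n]\!]$; consequently the frame $\mathcal{O}(\mathrm{LB}_1T)$ is generated by the opens $[m\,|\,b]:=\lambda n.[\![m\sim n]\!]\wedge[b]$ for $m\in T1$ and $b\in T2$.
   Context: Monads on $\mathbf{Set}$: sets $TA$, $\mathrm{return}$, $\mathbin{\gg\!=}\colon TA\times(TB)^A\to TB$ with monad laws; $t\gg s:=t\mathbin{\gg\!=}\lambda a.s$; ranked of rank $\kappa$: every $t\in TA$ is $t'\mathbin{\gg\!=}\lambda i.\mathrm{return}\,f(i)$ with $t'\in TI$, $|I|<\kappa$. $1=\{*\}$, $2=\{0,1\}$. $\mathrm{LB}_0T$: the locale whose frame is presented by generators $[b]$ ($b\in T2$) with relations $[t\mapsto a]\wedge[t\mapsto a']=\bot$ ($a\ne a'$), $[t\gg\mathrm{return}\,a\mapsto a]=\top$, $[t\mathbin{\gg\!=}u\mapsto b]=\bigvee_a[t\mapsto a]\wedge[t\gg u(a)\mapsto b]$, $[t\mapsto a]:=[t\mathbin{\gg\!=}\lambda a'.\mathrm{return}(\delta_a(a'))]$, $\delta_a(a')=1$ iff $a'=a$. Trace equivalence: $[\![m\sim_1m']\!]=\bigvee\{[t\mapsto a]:|A|\le\kappa,t\in TA,u,u'\colon A\to T1,u(a)=u'(a),m=t\mathbin{\gg\!=}u,m'=t\mathbin{\gg\!=}u'\}$;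 for $k\ge2$, $[\![m_1\sim_km_k]\!]=\bigvee\{\bigwedge_{i=1}^{k-1}[\![m_i\sim_1m_{i+1}]\!]:m_2,\dots,m_{k-1}\in T1\}$; $[\![m\sim m']\!]=\bigvee_{k\ge1}[\![m\sim_km']\!]$; $m\sim_bm'$ iff $b\le[\![m\sim m']\!]$ ($b$ complemented). The locale of transitions $\mathrm{LB}_1T$ has frame the set of functions $w\colon T1\to\mathcal{O}(\mathrm{LB}_0T)$ with $b\wedge w(m_1)=b\wedge w(m_2)$ whenever $b$ complemented and $m_1\sim_bm_2$, ordered pointwise (with pointwise meets); $\mathrm{const}_u$ is the constant function with value $u$. *)

(* Defs.v *)
From Stdlib Require Import List ClassicalEpsilon.
Set Implicit Arguments.

Record Monad := {
  M :> Type -> Type;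
  ret : forall A : Type, A -> M A;
  bind : forall A B : Type, M A -> (A -> M B) -> M B;
  bind_ret_l : forall (A B : Type) (a : A) (f : A -> M B), bind (ret a) f = f a;
  bind_ret_r : forall (A : Type) (t : M A), bind t (@ret A) = t;
  bind_assoc : forall (A B C : Type) (t : M A) (f : A -> M B) (g : B -> M C),
      bind (bind t f) g = bind t (fun a => bind (f a) g)
}.
Arguments ret {m A}.
Arguments bind {m A B}.

Definition then_ (T : Monad) (A B : Type) (t : T A) (s : T B) : T B :=
  bind t (fun _ => s).
Arguments then_ {T A B}.

(* cardinal comparisons; a cardinal kappa is represented by a type K with |K| = kappa *)
Definition card_le (A K : Type) : Prop := exists f : A -> K, forall x y, f x = f y -> x = y.
Definition card_lt (A K : Type) : Prop := card_le A K /\ ~ card_le K A.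

Definition ranked_of_rank (T : Monad) (K : Type) : Prop :=
  forall (A : Type) (t : T A), exists (I : Type) (t' : T I) (f : I -> A),
    card_lt I K /\ t = bind t' (fun i => ret (f i)).

Record Frame := {
  fcar :> Type;
  fle : fcar -> fcar -> Prop;
  fmeet : fcar -> fcar -> fcar;
  ftop : fcar;
  fsup : (fcar -> Prop) -> fcar;
  fle_refl : forall x, fle x x;
  fle_trans : forall x y z, fle x y -> fle y z -> fle x z;
  fle_antisym : forall x y, fle x y -> fle y x -> x = y;
  fmeet_l : forall x y, fle (fmeet x y) x;
  fmeet_r : forall x y, fle (fmeet x y) y;
  fmeet_glb : forall x y z, fle z x -> fle z y -> fle z (fmeet x y);
  ftop_max : forall x, fle x ftop;
  fsup_ub : forall (P : fcar -> Prop) x, P x -> fle x (fsup P);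
  fsup_lub : forall (P : fcar -> Prop) z, (forall x, P x -> fle x z) -> fle (fsup P) z;
  fdistr : forall a (P : fcar -> Prop),
      fmeet a (fsup P) = fsup (fun x => exists y, P y /\ x = fmeet a y)
}.
Arguments fle {f}.
Arguments fmeet {f}.
Arguments ftop {f}.
Arguments fsup {f}.

Definition fbot (F : Frame) : F := fsup (fun _ => False).
Arguments fbot {F}.
Definition fjoin (F : Frame) (x y : F) : F := fsup (fun z => z = x \/ z = y).
Arguments fjoin {F}.

Definition complemented {F : Frame} (b : F) : Prop :=
  exists c : F, fmeet b c = fbot /\ fjoin b c = ftop.

Definition frame_hom {F G : Frame} (phi : F -> G) : Prop :=
  (forall x y, phi (fmeet x y) = fmeet (phi x) (phi y)) /\
  phi ftop = ftop /\
  (forall P : F -> Prop, phi (fsup P) = fsup (fun y => exists x, P x /\ y = phi x)).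

(* delta_a(a') = 1 iff a' = a ; 2 = bool, 1 = true, 1 = unit *)
Definition delta (A : Type) (a a' : A) : bool :=
  if excluded_middle_informative (a' = a) then true else false.

(* the element of T2 whose generator is [t |-> a] *)
Definition maps_to (T : Monad) (A : Type) (t : T A) (a : A) : T bool :=
  bind t (fun a' => ret (delta a a')).
Arguments maps_to {T A}.

Definition LB0_relations {T : Monad} {G : Frame} (h : T bool -> G) : Prop :=
  (forall (A : Type) (t : T A) (a a' : A), a <> a' ->
      fmeet (h (maps_to t a)) (h (maps_to t a')) = fbot) /\
  (forall (A B : Type) (t : T A) (a : B), h (maps_to (then_ t (ret a)) a) = ftop) /\
  (forall (A B : Type) (t : T A) (u : A -> T B) (b : B),
      h (maps_to (bind t u) b) =
      fsup (fun x => exists a : A,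
              x = fmeet (h (maps_to t a)) (h (maps_to (then_ t (u a)) b)))).

(* (F, g) is the frame presented by generators [b] := g b (b in T2) and the
   relations above, characterised by its universal property. *)
Definition is_LB0 {T : Monad} {F : Frame} (g : T bool -> F) : Prop :=
  LB0_relations g /\
  forall (G : Frame) (h : T bool -> G), LB0_relations h ->
    exists phi : F -> G, frame_hom phi /\ (forall b, phi (g b) = h b) /\
      forall psi : F -> G, frame_hom psi -> (forall b, psi (g b) = h b) ->
        forall x, psi x = phi x.

Section Trace.
Variables (T : Monad) (K : Type) (F : Frame) (g : T bool -> F).

Definition sim1 (m m' : T unit) : F :=
  fsup (fun x => exists (A : Type) (t : T A) (u u' : A -> T unit) (a : A),
          card_le A K /\ u a = u' a /\ m = bind t u /\ m' = bind t u' /\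
          x = g (maps_to t a)).

Fixpoint chain_meet (m : T unit) (l : list (T unit)) (m' : T unit) : F :=
  match l with
  | nil => sim1 m m'
  | x :: l' => fmeet (sim1 m x) (chain_meet x l' m')
  end.

Definition simk (m m' : T unit) (k : nat) : F :=
  match k with
  | 1 => sim1 m m'
  | _ => fsup (fun x => exists l : list (T unit), length l = k - 2 /\ x = chain_meet m l m')
  end.

Definition sim (m m' : T unit) : F :=
  fsup (fun x => exists k : nat, 1 <= k /\ x = simk m m' k).

Definition sim_b (b : F) (m m' : T unit) : Prop := complemented b /\ fle b (sim m m').

Definition isLB1 (w : T unit -> F) : Prop :=
  forall (b : F) (m1 m2 : T unit), complemented b -> sim_b b m1 m2 ->
    fmeet b (w m1) = fmeet b (w m2).

Definition le1 (v w : T unit -> F) : Prop := forall n, fle (v n) (w n).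
Definition meet1 (v w : T unit -> F) : T unit -> F := fun n => fmeet (v n) (w n).
Definition const (u : F) : T unit -> F := fun _ => u.

Definition is_join1 (P : (T unit -> F) -> Prop) (v : T unit -> F) : Prop :=
  isLB1 v /\ (forall x, P x -> le1 x v) /\
  (forall u, isLB1 u -> (forall x, P x -> le1 x u) -> le1 v u).

Definition hat (m : T unit) : T unit -> F := fun n => sim m n.

Definition gen1 (m : T unit) (b : T bool) : T unit -> F := meet1 (hat m) (const (g b)).

Definition generates1 (Gens : (T unit -> F) -> Prop) : Prop :=
  forall S : (T unit -> F) -> Prop,
    (forall x, Gens x -> S x) ->
    S (const ftop) ->
    (forall v1 v2, isLB1 v1 -> isLB1 v2 -> S v1 -> S v2 -> S (meet1 v1 v2)) ->
    (forall (P : (T unit -> F) -> Prop) v,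
        (forall x, P x -> isLB1 x /\ S x) -> is_join1 P v -> S v) ->
    forall w, isLB1 w -> S w.
End Trace.

Arguments sim1 {T} K {F} g.
Arguments chain_meet {T} K {F} g.
Arguments simk {T} K {F} g.
Arguments sim {T} K {F} g.
Arguments sim_b {T} K {F} g.
Arguments isLB1 {T} K {F} g.
Arguments le1 {T F}.
Arguments meet1 {T F}.
Arguments const {T F}.
Arguments is_join1 {T} K {F} g.
Arguments hat {T} K {F} g.
Arguments gen1 {T} K {F} g.
Arguments generates1 {T} K {F} g.

(* Main.v *)
Require Import Defs.
From Stdlib Require Import List Classical ProofIrrelevance FunctionalExtensionality.
Set Implicit Arguments.

Lemma fsup_ext (F : Frame) (P P' : F -> Prop) :
  (forall x, P x <-> P' x) -> fsup P = fsup P'.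
Proof.
  intros H; apply fle_antisym; apply fsup_lub; intros x Hx; apply fsup_ub; apply H; exact Hx.
Qed.

Lemma meet_comm (F : Frame) (a b : F) : fmeet a b = fmeet b a.
Proof. apply fle_antisym; apply fmeet_glb; (apply fmeet_l || apply fmeet_r). Qed.

Lemma meet_assoc (F : Frame) (a b c : F) : fmeet a (fmeet b c) = fmeet (fmeet a b) c.
Proof.
  apply fle_antisym; repeat apply fmeet_glb.
  - apply fmeet_l.
  - eapply fle_trans; [apply fmeet_r|apply fmeet_l].
  - eapply fle_trans; [apply fmeet_r|apply fmeet_r].
  - eapply fle_trans; [apply fmeet_l|apply fmeet_l].
  - eapply fle_trans; [apply fmeet_l|apply fmeet_r].
  - apply fmeet_r.
Qed.

Lemma meet_mono (F : Frame) (a a' b b' : F) :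
  fle a a' -> fle b b' -> fle (fmeet a b) (fmeet a' b').
Proof.
  intros H1 H2; apply fmeet_glb.
  - eapply fle_trans; [apply fmeet_l|exact H1].
  - eapply fle_trans; [apply fmeet_r|exact H2].
Qed.

Lemma meet_sup_le (F : Frame) (a z : F) (P : F -> Prop) :
  (forall p, P p -> fle (fmeet a p) z) -> fle (fmeet a (fsup P)) z.
Proof.
  intros H; rewrite fdistr; apply fsup_lub; intros x [y [Py ->]]; auto.
Qed.

Lemma bot_le (F : Frame) (x : F) : fle fbot x.
Proof. apply fsup_lub; intros _ []. Qed.

Lemma meet_top (F : Frame) (x : F) : fmeet x ftop = x.
Proof. apply fle_antisym; [apply fmeet_l| apply fmeet_glb; [apply fle_refl|apply ftop_max]]. Qed.

Lemma meet_idem (F : Frame) (x : F) : fmeet x x = x.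
Proof. apply fle_antisym; [apply fmeet_l| apply fmeet_glb; apply fle_refl]. Qed.

Definition subcar {F : Frame} (Q : F -> Prop) := {x : F | Q x}.

Lemma sig_eq' {F : Frame} {Q : F -> Prop} (x y : subcar Q) :
  proj1_sig x = proj1_sig y -> x = y.
Proof.
  destruct x as [x px], y as [y py]; simpl; intros ->.
  rewrite (proof_irrelevance _ px py); reflexivity.
Qed.

Definition supset {F : Frame} {Q : F -> Prop} (P : subcar Q -> Prop) : F -> Prop :=
  fun x => exists p, P p /\ x = proj1_sig p.

Lemma supset_Q {F : Frame} {Q : F -> Prop} (P : subcar Q -> Prop) :
  forall x, supset P x -> Q x.
Proof. intros x [p [_ ->]]; exact (proj2_sig p). Qed.

Definition subframe {F : Frame} (Q : F -> Prop)
  (Qtop : Q ftop) (Qmeet : forall x y, Q x -> Q y -> Q (fmeet x y))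
  (Qsup : forall P : F -> Prop, (forall x, P x -> Q x) -> Q (fsup P)) : Frame.
Proof.
  refine (@Build_Frame (subcar Q)
    (fun x y => fle (proj1_sig x) (proj1_sig y))
    (fun x y => exist _ (fmeet (proj1_sig x) (proj1_sig y)) (Qmeet _ _ (proj2_sig x) (proj2_sig y)))
    (exist _ ftop Qtop)
    (fun P => exist _ (fsup (supset P)) (Qsup _ (@supset_Q _ _ P)))
    _ _ _ _ _ _ _ _ _ _); simpl.
  - intros; apply fle_refl.
  - intros x y z; apply fle_trans.
  - intros x y H1 H2; apply sig_eq'; apply fle_antisym; assumption.
  - intros; apply fmeet_l.
  - intros; apply fmeet_r.
  - intros; apply fmeet_glb; assumption.
  - intros; apply ftop_max.
  - intros P x Px; apply fsup_ub; exists x; split; auto.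
  - intros P z H; apply fsup_lub; intros x [p [Pp ->]]; auto.
  - intros a P; apply sig_eq'; simpl. rewrite fdistr. apply fsup_ext.
    intros x; split.
    + intros [y [[p [Pp ->]] ->]].
      exists (exist _ (fmeet (proj1_sig a) (proj1_sig p)) (Qmeet _ _ (proj2_sig a) (proj2_sig p))).
      split; [exists p; split; auto|reflexivity].
    + intros [q [[p [Pp ->]] ->]]; simpl. exists (proj1_sig p); split; [exists p; auto|reflexivity].
Defined.

Lemma generation (T : Monad) (F : Frame) (g : T bool -> F) (Q : F -> Prop) :
  is_LB0 g -> (forall b, Q (g b)) -> Q ftop ->
  (forall x y, Q x -> Q y -> Q (fmeet x y)) ->
  (forall P : F -> Prop, (forall x, P x -> Q x) -> Q (fsup P)) ->
  forall x, Q x.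
Proof.
  intros [HR HU] Qg Qtop Qmeet Qsup.
  set (G := @subframe F Q Qtop Qmeet Qsup).
  set (h := fun b => (exist _ (g b) (Qg b) : fcar G)).
  destruct HR as [R1 [R2 R3]].
  assert (Hh : LB0_relations h).
  { split; [|split].
    - intros A t a a' Hne. apply sig_eq'. simpl. rewrite (R1 A t a a' Hne).
      unfold fbot; simpl. apply fsup_ext. intros x; split; [intros []|intros [p [[] _]]].
    - intros A B t a. apply sig_eq'. simpl. apply R2.
    - intros A B t u b. apply sig_eq'. simpl. rewrite R3. apply fsup_ext.
      intros x; split.
      + intros [a ->]. exists (fmeet (h (maps_to t a)) (h (maps_to (then_ t (u a)) b))).
        split; [exists a; reflexivity|reflexivity].
      + intros [p [[a ->] ->]]. exists a; reflexivity. }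
  destruct (HU G h Hh) as [phi [Hphi [Hphig _]]].
  destruct (HU F g (conj R1 (conj R2 R3))) as [phi0 [_ [_ Huniq]]].
  set (incl := fun x : fcar G => proj1_sig x).
  assert (E1 : forall x, x = phi0 x).
  { apply (Huniq (fun x => x)); [|reflexivity].
    split; [reflexivity|split; [reflexivity|]]. intros P; apply fsup_ext.
    intros x; split; [intros Px; exists x; auto|intros [y [Py ->]]; exact Py]. }
  assert (E2 : forall x, incl (phi x) = phi0 x).
  { apply Huniq.
    - destruct Hphi as [Hm [Ht Hs]]. split; [|split].
      + intros x y; unfold incl; rewrite Hm; reflexivity.
      + unfold incl; rewrite Ht; reflexivity.
      + intros P; unfold incl; rewrite Hs; simpl. apply fsup_ext. intros z; split.
        * intros [p [[x [Px ->]] ->]]. exists x; auto.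
        * intros [x [Px ->]]. exists (phi x). split; [exists x; auto|reflexivity].
    - intros b; unfold incl; rewrite Hphig; reflexivity. }
  intros x. rewrite (E1 x), <- E2. exact (proj2_sig (phi x)).
Qed.

Definition allchains {T : Monad} (K : Type) {F : Frame} (g : T bool -> F) (m n : T unit) : F :=
  fsup (fun x => exists l, x = chain_meet K g m l n).

Lemma sim_eq {T : Monad} (K : Type) {F : Frame} (g : T bool -> F) (m n : T unit) :
  sim K g m n = allchains K g m n.
Proof.
  apply fle_antisym.
  - apply fsup_lub. intros x [k [Hk ->]].
    destruct k as [|[|k]]; [inversion Hk| |].
    + apply fsup_ub. exists nil. reflexivity.
    + apply fsup_lub. intros x [l [_ ->]]. apply fsup_ub. exists l; reflexivity.
  - apply fsup_lub. intros x [l ->].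
    eapply fle_trans; [|apply fsup_ub; exists (S (S (length l))); split; [auto with arith|reflexivity]].
    simpl. apply fsup_ub. exists l. split; [simpl; rewrite PeanoNat.Nat.sub_0_r; reflexivity|reflexivity].
Qed.

Lemma chain_app {T : Monad} (K : Type) {F : Frame} (g : T bool -> F) l1 l2 (m x n : T unit) :
  fle (fmeet (chain_meet K g m l1 x) (chain_meet K g x l2 n)) (chain_meet K g m (l1 ++ x :: l2) n).
Proof.
  revert m; induction l1 as [|y l1 IH]; intros m; simpl.
  - apply fle_refl.
  - rewrite <- meet_assoc. apply meet_mono; [apply fle_refl|apply IH].
Qed.

Lemma sim1_sym {T : Monad} (K : Type) {F : Frame} (g : T bool -> F) (m n : T unit) :
  fle (sim1 K g m n) (sim1 K g n m).
Proof.
  apply fsup_lub. intros x [A [t [u [u' [a [H1 [H2 [H3 [H4 ->]]]]]]]]].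
  apply fsup_ub. exists A, t, u', u, a. auto 10.
Qed.

Lemma chain_sym {T : Monad} (K : Type) {F : Frame} (g : T bool -> F) l (m n : T unit) :
  fle (chain_meet K g m l n) (chain_meet K g n (rev l) m).
Proof.
  revert m; induction l as [|x l IH]; intros m; simpl.
  - apply sim1_sym.
  - eapply fle_trans; [|apply chain_app]. rewrite meet_comm.
    apply meet_mono; [apply IH|apply sim1_sym].
Qed.

Lemma sim_sym {T : Monad} (K : Type) {F : Frame} (g : T bool -> F) (m n : T unit) :
  fle (sim K g m n) (sim K g n m).
Proof.
  rewrite !sim_eq. apply fsup_lub. intros x [l ->]. apply fsup_ub. exists (rev l).
  apply fle_antisym; [apply chain_sym|]. rewrite <- (rev_involutive l) at 2. apply chain_sym.
Qed.

Lemma sim_trans {T : Monad} (K : Type) {F : Frame} (g : T bool -> F) (m x n : T unit) :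
  fle (fmeet (sim K g m x) (sim K g x n)) (sim K g m n).
Proof.
  rewrite !sim_eq. apply meet_sup_le. intros p [l1 ->].
  rewrite meet_comm. apply meet_sup_le. intros q [l2 ->]. rewrite meet_comm.
  eapply fle_trans; [apply chain_app|]. apply fsup_ub. eexists; reflexivity.
Qed.

Lemma sim1_le_sim {T : Monad} (K : Type) {F : Frame} (g : T bool -> F) (m n : T unit) :
  fle (sim1 K g m n) (sim K g m n).
Proof. apply fsup_ub. exists 1. split; [auto|reflexivity]. Qed.

Lemma maps_compl {T : Monad} {F : Frame} (g : T bool -> F) (HR : LB0_relations g)
  (A : Type) (t : T A) (a : A) : complemented (g (maps_to t a)).
Proof.
  destruct HR as [R1 [R2 R3]].
  exists (fsup (fun x => exists a', a' <> a /\ x = g (maps_to t a'))). split.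
  - apply fle_antisym; [|apply bot_le]. apply meet_sup_le. intros p [a' [Hne ->]].
    rewrite (R1 A t a a' (not_eq_sym Hne)). apply fle_refl.
  - apply fle_antisym; [apply ftop_max|].
    pose proof (R3 A unit t (fun _ => ret tt) tt) as E.
    pose proof (R2 A unit t tt) as E2. unfold then_ in E2. rewrite E2 in E.
    rewrite E. apply fsup_lub. intros x [a0 ->].
    eapply fle_trans; [apply fmeet_l|].
    destruct (classic (a0 = a)) as [->|Hne].
    + apply fsup_ub; left; reflexivity.
    + eapply fle_trans; [|apply fsup_ub; right; reflexivity]. apply fsup_ub. eauto.
Qed.

Lemma sim1_transport {T : Monad} (K : Type) {F : Frame} (g : T bool -> F) (HR : LB0_relations g)
  (w : T unit -> F) (Hw : isLB1 K g w) (m x : T unit) :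
  fle (fmeet (sim1 K g m x) (w m)) (w x).
Proof.
  rewrite meet_comm. apply meet_sup_le.
  intros p [A [t [u [u' [a [Hc [Hu [Hm [Hx ->]]]]]]]]].
  rewrite meet_comm. rewrite (Hw (g (maps_to t a)) m x (maps_compl HR t a)).
  - apply fmeet_r.
  - split; [apply maps_compl; exact HR|].
    eapply fle_trans; [|apply sim1_le_sim]. apply fsup_ub.
    exists A, t, u, u', a. auto 10.
Qed.

Lemma chain_transport {T : Monad} (K : Type) {F : Frame} (g : T bool -> F) (HR : LB0_relations g)
  (w : T unit -> F) (Hw : isLB1 K g w) l (m n : T unit) :
  fle (fmeet (chain_meet K g m l n) (w m)) (w n).
Proof.
  revert m; induction l as [|x l IH]; intros m; simpl.
  - apply sim1_transport; assumption.
  - eapply fle_trans; [|apply (IH x)].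
    apply fmeet_glb.
    + eapply fle_trans; [apply fmeet_l|apply fmeet_r].
    + eapply fle_trans; [|apply (sim1_transport HR Hw m x)].
      apply meet_mono; [apply fmeet_l|apply fle_refl].
Qed.

Lemma sim_transport {T : Monad} (K : Type) {F : Frame} (g : T bool -> F) (HR : LB0_relations g)
  (w : T unit -> F) (Hw : isLB1 K g w) (m n : T unit) :
  fle (fmeet (sim K g m n) (w m)) (w n).
Proof.
  rewrite sim_eq, meet_comm. apply meet_sup_le. intros p [l ->]. rewrite meet_comm.
  apply chain_transport; assumption.
Qed.

Lemma sim_refl {T : Monad} (K : Type) {F : Frame} (g : T bool -> F) (HR : LB0_relations g)
  (k0 : K) (n : T unit) : sim K g n n = ftop.
Proof.
  destruct HR as [R1 [R2 R3]].
  apply fle_antisym; [apply ftop_max|].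
  eapply fle_trans; [|apply sim1_le_sim].
  pose proof (R2 unit unit (@ret T unit tt) tt) as E. unfold then_ in E. rewrite bind_ret_l in E.
  rewrite <- E. apply fsup_ub. exists unit, (@ret T unit tt), (fun _ => n), (fun _ => n), tt.
  split; [exists (fun _ => k0); intros [] [] _; reflexivity|].
  rewrite bind_ret_l. auto.
Qed.

Lemma hat_LB1 {T : Monad} (K : Type) {F : Frame} (g : T bool -> F) (m : T unit) :
  isLB1 K g (hat K g m).
Proof.
  intros b m1 m2 _ [_ Hb]. unfold hat.
  assert (H : forall m1 m2, fle b (sim K g m1 m2) ->
            fle (fmeet b (sim K g m m1)) (fmeet b (sim K g m m2))).
  { intros n1 n2 Hb'. apply fmeet_glb; [apply fmeet_l|].
    eapply fle_trans; [|apply (sim_trans K g m n1 n2)].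
    rewrite meet_comm. apply meet_mono; [apply fle_refl|exact Hb']. }
  apply fle_antisym; apply H; [exact Hb|].
  eapply fle_trans; [exact Hb|apply sim_sym].
Qed.

Lemma hatc_LB1 {T : Monad} (K : Type) {F : Frame} (g : T bool -> F) (m : T unit) (c : F) :
  isLB1 K g (meet1 (hat K g m) (const c)).
Proof.
  intros b m1 m2 Hc Hb. unfold meet1, const.
  rewrite !meet_assoc. rewrite (@hat_LB1 T K F g m b m1 m2 Hc Hb). reflexivity.
Qed.


Lemma meet_self_distr (F : Frame) (h x y : F) :
  fmeet (fmeet h x) (fmeet h y) = fmeet h (fmeet x y).
Proof.
  apply fle_antisym; repeat apply fmeet_glb.
  - eapply fle_trans; apply fmeet_l.
  - eapply fle_trans; [apply fmeet_l|apply fmeet_r].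
  - eapply fle_trans; [apply fmeet_r|apply fmeet_r].
  - apply fmeet_l.
  - eapply fle_trans; [apply fmeet_r|apply fmeet_l].
  - apply fmeet_l.
  - eapply fle_trans; [apply fmeet_r|apply fmeet_r].
Qed.

Theorem lemma3p12 (T : Monad) (K : Type) (F : Frame) (g : T bool -> F) :
  ranked_of_rank T K -> is_LB0 g ->
  (forall w : T unit -> F, isLB1 K g w ->
     (forall m : T unit, isLB1 K g (hat K g m)) /\
     (forall m : T unit, isLB1 K g (meet1 (hat K g m) (const (w m)))) /\
     is_join1 K g (fun v => exists m : T unit, v = meet1 (hat K g m) (const (w m))) w) /\
  (forall (m : T unit) (b : T bool), isLB1 K g (gen1 K g m b)) /\
  generates1 K g (fun v => exists (m : T unit) (b : T bool), v = gen1 K g m b).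
Proof.
  intros Hrank HLB.
  assert (HR : LB0_relations g) by (exact (proj1 HLB)).
  assert (k0 : exists k : K, True).
  { destruct (Hrank unit (@ret T unit tt)) as [I0 [t' [f [[_ Hn] _]]]].
    destruct (classic (exists k : K, True)) as [h|h]; [exact h|].
    exfalso; apply Hn. exists (fun k => False_rect I0 (h (ex_intro _ k I))).
    intros x; exfalso; apply h; eauto. }
  destruct k0 as [k0 _].
  assert (Hjoin : forall w, isLB1 K g w ->
     is_join1 K g (fun v => exists m : T unit, v = meet1 (hat K g m) (const (w m))) w).
  { intros w Hw. split; [exact Hw|split].
    - intros x [m ->] n. unfold meet1, hat, const. apply sim_transport; assumption.
    - intros u Hu Hub n. eapply fle_trans; [|apply (Hub _ (ex_intro _ n eq_refl) n)].
      unfold meet1, hat, const. rewrite (sim_refl HR k0), meet_comm, meet_top. apply fle_refl. }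
  split; [|split].
  - intros w Hw. split; [apply hat_LB1|split; [intros; apply hatc_LB1|apply Hjoin; exact Hw]].
  - intros m b. apply hatc_LB1.
  - intros S HG Htop Hmeet Hsup w Hw.
    apply (Hsup (fun v => exists m : T unit, v = meet1 (hat K g m) (const (w m))) w); [|apply Hjoin; exact Hw].
    intros x [m ->]. split; [apply hatc_LB1|].
    generalize (w m). revert m. clear w Hw. intros m y. revert y m.
    apply (@generation T F g (fun y => forall m, S (meet1 (hat K g m) (const y))) HLB).
    + intros b m. apply HG. exists m, b. reflexivity.
    + intros m. destruct HR as [R1 [R2 R3]].
      pose proof (R2 unit unit (@ret T unit tt) tt) as E.
      rewrite <- E. apply HG. eexists; eexists; reflexivity.
    + intros x y Hx Hy m.
      replace (meet1 (hat K g m) (const (fmeet x y))) with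
        (meet1 (meet1 (hat K g m) (const x)) (meet1 (hat K g m) (const y))).
      * apply Hmeet; try apply hatc_LB1; auto.
      * apply functional_extensionality; intros n; unfold meet1, const.
        apply meet_self_distr.
    + intros P HP m.
      apply (Hsup (fun v => exists x, P x /\ v = meet1 (hat K g m) (const x))).
      * intros v [x [Px ->]]. split; [apply hatc_LB1|apply HP; exact Px].
      * split; [apply hatc_LB1|split].
        -- intros v [x [Px ->]] n. unfold meet1, const.
           apply meet_mono; [apply fle_refl|apply fsup_ub; exact Px].
        -- intros u Hu Hub n. unfold meet1, const. apply meet_sup_le.
           intros p Pp. exact (Hub _ (ex_intro _ p (conj Pp eq_refl)) n).
Qed.
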